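(* Let $k\ge1$, let $A_k$ be the matrix defined below, and let $\mathbf{e}_{2k+1}\in\mathbb{Z}^{2k+1}$ be the last standard unit vector. Let $G=G_{A_k,\mathbf{e}_{2k+1},\mathcal{R}_{\mathrm{lex}}(A_k)}$. Then the edge-connectivity of $G$ equals $1$, whereas the minimal degree of $G$ equals $k$.
   Context: Let $I_k$ be the $k\times k$ identity matrix and $\mathbf{1}_k$ the all-ones vector in $\mathbb{Z}^k$. Define $$A_k=\begin{pmatrix} I_k & I_k & 0 & 0 & -\mathbf{1}_k & \mathbf{0}\\ 0&0&I_k&I_k&\mathbf{0}&-\mathbf{1}_k\\ 0&0&0&0&1&1\end{pmatrix}\in\mathbb{Z}^{(2k+1)\times(4k+2)}$$ (zero blocks of appropriate sizes; last two columns are single columns). For $A\in\mathbb{Z}^{d\times n}$, $\mathbf{b}\in\mathbb{Z}^d$: fiber $\mathcal{F}_A(\mathbf{b})=\{\mathbf{u}\in\mathbb{Z}_{\ge0}^n:A\mathbf{u}=\mathbf{b}\}$; for $\mathcal{M}\subset\mathbb{Z}^n$, the fiber graph $G_{A,\mathbf{b},\mathcal{M}}$ has vertex set $\mathcal{F}_A(\mathbf{b})$, distinct $\mathbf{u},\mathbf{v}$ adjacent iff $\mathbf{u}-\mathbf{v}\in\pm\mathcal{M}$. The toric ideal of $A$ is $I_A=\langle \mathbf{x}^{\mathbf{u}^+}-\mathbf{x}^{\mathbf{u}^-}:\mathbf{u}\in\ker(A)\cap\mathbb{Z}^n\rangle\subset K[x_1,\dots,x_n]$, where $\mathbf{u}^+,\mathbf{u}^-\in\mathbb{Z}^n_{\ge0}$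 are the positive and negative parts of $\mathbf{u}$. The lexicographic term order $\prec_{\mathrm{lex}}$ on $\mathbb{Z}_{\ge0}^n$: $\mathbf{u}\prec_{\mathrm{lex}}\mathbf{v}$ iff $u_i<v_i$ for the smallest $i$ with $u_i\ne v_i$. $\mathcal{R}_{\mathrm{lex}}(A)$ is the set of vectors $\mathbf{u}$ such that $\mathbf{x}^{\mathbf{u}^+}-\mathbf{x}^{\mathbf{u}^-}$ (with leading term $\mathbf{x}^{\mathbf{u}^+}$) belongs to the reduced Gröbner basis of $I_A$ with respect to $\prec_{\mathrm{lex}}$. A graph is $\ell$-edge-connected if it has more than one vertex and removing fewer than $\ell$ edges leaves it connected; the edge-connectivity is the largest such $\ell$. Minimal degree = minimum vertex degree. *)

(* Defs.v *)
From HB Require Import structures.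
From mathcomp Require Import all_boot all_order all_algebra.
From mathcomp.multinomials Require Import mpoly.
From Stdlib Require Import Relations.
Set Implicit Arguments. Unset Strict Implicit. Unset Printing Implicit Defensive.
Import Order.TTheory GRing.Theory Num.Theory.
Local Open Scope ring_scope.

(* Columns (0-indexed): [0,k) first I_k, [k,2k) second I_k, [2k,3k) third,
   [3k,4k) fourth, 4k and 4k+1 the two single columns. *)
Definition Ak (k : nat) : 'M[int]_(2 * k + 1, 4 * k + 2) :=
  \matrix_(i < 2 * k + 1, j < 4 * k + 2)
    if (i < k)%N then
      (if (j == i :> nat) || (j == k + i :> nat) then 1
       else if j == 4 * k :> nat then -1 else 0)
    else if (i < 2 * k)%N then
      (if (j == k + i :> nat) || (j == 2 * k + i :> nat) then 1
       else if j == (4 * k).+1 :> nat then -1 else 0)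
    else
      (if (j == 4 * k :> nat) || (j == (4 * k).+1 :> nat) then 1 else 0).

Definition e_last (k : nat) : 'cV[int]_(2 * k + 1) :=
  \col_(i < 2 * k + 1) (if i == 2 * k :> nat then 1 else 0).

Section Toric.
Variables (K : fieldType) (d n : nat) (A : 'M[int]_(d, n)).

Definition posp (u : 'cV[int]_n) : 'X_{1..n} :=
  [multinom absz (Num.max (u i ord0) 0%R) | i < n].
Definition negp (u : 'cV[int]_n) : 'X_{1..n} :=
  [multinom absz (Num.max (- u i ord0) 0%R) | i < n].

Definition binom (u : 'cV[int]_n) : {mpoly K[n]} := 'X_[posp u] - 'X_[negp u].

Definition in_kernel (u : 'cV[int]_n) : Prop := A *m u = 0.

Definition toric_ideal (p : {mpoly K[n]}) : Prop :=
  exists s : seq ({mpoly K[n]} * 'cV[int]_n),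
    (forall x, x \in s -> in_kernel x.2) /\
    p = \sum_(x <- s) x.1 * binom x.2.

End Toric.

Section GB.
Variables (K : fieldType) (n : nat).

Definition lex_lt (m m' : 'X_{1..n}) : Prop :=
  exists i : 'I_n, (forall j : 'I_n, (j < i)%N -> m j = m' j) /\ (m i < m' i)%N.

Definition mdivides (m m' : 'X_{1..n}) : Prop := forall i : 'I_n, (m i <= m' i)%N.

Definition is_lead (p : {mpoly K[n]}) (m : 'X_{1..n}) : Prop :=
  m \in msupp p /\ forall m', m' \in msupp p -> m' = m \/ lex_lt m' m.

Definition reduced_groebner_basis (I : {mpoly K[n]} -> Prop)
    (G : seq {mpoly K[n]}) : Prop :=
  [/\ (forall g, g \in G -> I g /\ g != 0),
      (forall f, I f -> f != 0 -> forall mf, is_lead f mf ->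
         exists g, exists mg, [/\ g \in G, is_lead g mg & mdivides mg mf]),
      (forall g mg, g \in G -> is_lead g mg -> g@_mg = 1) &
      (forall g g' mg, g \in G -> g' \in G -> g != g' -> is_lead g mg ->
         forall m, m \in msupp g' -> ~ mdivides mg m)].

End GB.

Definition R_lex (K : fieldType) (d n : nat) (A : 'M[int]_(d, n))
    (u : 'cV[int]_n) : Prop :=
  exists G, reduced_groebner_basis (@toric_ideal K _ _ A) G /\
            binom K u \in G /\ is_lead (binom K u) (posp u).

Definition fiber (d n : nat) (A : 'M[int]_(d, n)) (b : 'cV[int]_d)
    (u : 'cV[int]_n) : Prop :=
  (forall i, 0 <= u i 0) /\ A *m u = b.

Definition fiber_adj (n : nat) (M : 'cV[int]_n -> Prop) (u v : 'cV[int]_n) : Prop :=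
  u <> v /\ (M (u - v) \/ M (v - u)).

Section Graphs.
Variables (T : eqType) (V : T -> Prop) (E : T -> T -> Prop).

Definition adj_minus (F : seq (T * T)) (x y : T) : Prop :=
  E x y /\ (x, y) \notin F /\ (y, x) \notin F.

Definition graph_connected (E' : T -> T -> Prop) : Prop :=
  forall x y, V x -> V y ->
    clos_refl_trans T (fun a b => V a /\ V b /\ E' a b) x y.

Definition l_edge_connected (l : nat) : Prop :=
  (exists x y, V x /\ V y /\ x <> y) /\
  forall F : seq (T * T), (size F < l)%N -> graph_connected (adj_minus F).

Definition edge_connectivity_is (l : nat) : Prop :=
  l_edge_connected l /\ forall m, l_edge_connected m -> (m <= l)%N.

Definition has_degree (x : T) (dg : nat) : Prop :=
  exists s : seq T, [/\ uniq s, size s = dg &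
    forall y, y \in s <-> (V y /\ E x y)].

Definition degree_at_least (x : T) (dg : nat) : Prop :=
  exists s : seq T, [/\ uniq s, size s = dg &
    forall y, y \in s -> (V y /\ E x y)].

Definition min_degree_is (dg : nat) : Prop :=
  (exists x, V x /\ has_degree x dg) /\
  forall x, V x -> degree_at_least x dg.

End Graphs.

(* Main.v *)
Require Import Defs.
From mathcomp Require Import all_boot all_order all_algebra.
From mathcomp.multinomials Require Import mpoly.
From mathcomp Require Import zify ring lra.
From Stdlib Require Import Relations.
Set Implicit Arguments. Unset Strict Implicit. Unset Printing Implicit Defensive.
Import Order.TTheory GRing.Theory Num.Theory.
Local Open Scope ring_scope.

Section Generic.
Variables (K : fieldType) (d n : nat) (A : 'M[int]_(d, n)).

Lemma lex_lt_asym (m m' : 'X_{1..n}) : lex_lt m m' -> lex_lt m' m -> False.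
Proof.
move=> [i [Hi Hlt]] [i' [Hi' Hlt']].
case: (ltngtP i i') => H.
- by move: (Hi' _ H) Hlt => ->; rewrite ltnn.
- by move: (Hi _ H) Hlt' => ->; rewrite ltnn.
- have /val_inj E : val i = val i' by [].
  by subst i'; move: (ltn_trans Hlt Hlt'); rewrite ltnn.
Qed.

Lemma lex_lt_irr (m : 'X_{1..n}) : ~ lex_lt m m.
Proof. by move=> [i [_ H]]; rewrite ltnn in H. Qed.

Lemma is_lead_uniq (p : {mpoly K[n]}) m1 m2 : is_lead p m1 -> is_lead p m2 -> m1 = m2.
Proof.
move=> [H1 L1] [H2 L2].
case: (L1 _ H2) => [->//|lt21]; case: (L2 _ H1) => [//|lt12].
by case: (lex_lt_asym lt21 lt12).
Qed.

Lemma posp_coord (u : 'cV[int]_n) i : ((posp u i)%:Z = Num.max (u i ord0) 0)%R.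
Proof. by rewrite /posp mnmE gez0_abs // le_max lexx orbT. Qed.
Lemma negp_coord (u : 'cV[int]_n) i : ((negp u i)%:Z = Num.max (- u i ord0) 0)%R.
Proof. by rewrite /negp mnmE gez0_abs // le_max lexx orbT. Qed.

Lemma posp_negp (u : 'cV[int]_n) i : ((posp u i)%:Z - (negp u i)%:Z = u i ord0)%R.
Proof.
rewrite posp_coord negp_coord.
case: (lerP 0 (u i ord0)) => H.
- by rewrite max_r ?subr0 // oppr_le0.
- by rewrite max_l ?sub0r ?opprK // oppr_ge0 ltW.
Qed.

Lemma posp_neq_negp (u : 'cV[int]_n) : u != 0 -> posp u != negp u.
Proof.
move=> Hu; apply/negP => /eqP E; move/negP: Hu; apply; apply/eqP/matrixP => i j.
rewrite (ord1 j) mxE -posp_negp E subrr //.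
Qed.

Lemma binom_coef (u : 'cV[int]_n) m :
  (binom K u)@_m = ((posp u == m)%:R - (negp u == m)%:R).
Proof. by rewrite /binom mcoeffB !mcoeffX. Qed.

Lemma msupp_binom (u : 'cV[int]_n) m : u != 0 ->
  (m \in msupp (binom K u)) = (m == posp u) || (m == negp u).
Proof.
move=> Hu; have Hne := posp_neq_negp Hu.
rewrite mcoeff_msupp binom_coef.
case: (eqVneq (posp u) m) => [<-|H1]; case: (eqVneq (negp u) m) => [E|H2] //=.
- by rewrite eq_sym in Hne; rewrite (negbTE Hne) subr0 oner_eq0.
- by rewrite eq_sym in Hne; rewrite (negbTE Hne) subr0 oner_eq0.
- by rewrite sub0r oppr_eq0 oner_eq0.
- by rewrite subrr eqxx.
Qed.

Lemma binom_neq0 (u : 'cV[int]_n) : u != 0 -> binom K u != 0.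
Proof.
move=> Hu; apply/negP => /eqP E.
have : posp u \in msupp (binom K u) by rewrite msupp_binom // eqxx.
by rewrite E msupp0.
Qed.

Lemma binom_lead (u : 'cV[int]_n) : u != 0 -> lex_lt (negp u) (posp u) ->
  is_lead (binom K u) (posp u).
Proof.
move=> Hu Hlt; split; first by rewrite msupp_binom // eqxx.
move=> m'; rewrite msupp_binom // => /orP [/eqP ->|/eqP ->]; by [left|right].
Qed.

Lemma binom_lead_coef (u : 'cV[int]_n) : u != 0 -> (binom K u)@_(posp u) = 1.
Proof.
move=> Hu; rewrite binom_coef eqxx eq_sym (negbTE (posp_neq_negp Hu)) subr0 //.
Qed.

Lemma kernel_toric (u : 'cV[int]_n) : in_kernel A u -> @toric_ideal K _ _ A (binom K u).
Proof.
move=> H; exists [:: (1, u)]; split.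
- by move=> x; rewrite inE => /eqP ->.
- by rewrite big_seq1 mul1r.
Qed.

Lemma mdiv_trans (a b c : 'X_{1..n}) : mdivides a b -> mdivides b c -> mdivides a c.
Proof. by move=> H1 H2 i; apply: leq_trans (H1 i) (H2 i). Qed.

Lemma key (G : seq {mpoly K[n]}) (w w0 : 'cV[int]_n) m :
  reduced_groebner_basis (@toric_ideal K _ _ A) G ->
  binom K w \in G -> is_lead (binom K w) (posp w) ->
  in_kernel A w0 -> w0 != 0 -> lex_lt (negp w0) (posp w0) ->
  m \in msupp (binom K w) -> mdivides (posp w0) m ->
  mdivides (posp w) (posp w0).
Proof.
move=> [C1 C2 C3 C4] Hg Hl Hk Hnz Hlt Hm Hdiv.
have [g' [mg' [Hg' Hl' Hd']]] := C2 _ (kernel_toric Hk) (binom_neq0 Hnz) _ (binom_lead Hnz Hlt).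
case: (eqVneq g' (binom K w)) => E.
- subst g'; by rewrite (is_lead_uniq Hl Hl').
- by case: (C4 _ _ _ Hg' Hg E Hl' _ Hm); apply: mdiv_trans Hd' Hdiv.
Qed.

End Generic.

Section T.
Variables (K : fieldType) (N n : nat) (Fm : 'I_n -> 'X_{1..N}).
Definition hh (j : 'I_n) : {mpoly K[N]} := 'X_[Fm j].
Definition Psi (p : {mpoly K[n]}) : {mpoly K[N]} := mmap (@mpolyC N K) hh p.
Definition beta (m : 'X_{1..n}) : 'X_{1..N} := (\sum_(j < n) (Fm j *+ m j))%MM.
Lemma Psi_X m : Psi 'X_[m] = 'X_[beta m].
Proof. by rewrite /Psi mmapX /mmap1 /hh mprodXnE. Qed.
Lemma Psi_M p q : Psi (p * q) = Psi p * Psi q.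
Proof. by rewrite /Psi rmorphM. Qed.
Lemma Psi_B p q : Psi (p - q) = Psi p - Psi q.
Proof. by rewrite /Psi rmorphB. Qed.
Lemma Psi_sum I (r : seq I) (F : I -> {mpoly K[n]}) : Psi (\sum_(x <- r) F x) = \sum_(x <- r) Psi (F x).
Proof. by rewrite /Psi rmorph_sum. Qed.
Lemma Psi_coef p mu : (Psi p)@_mu = \sum_(m <- msupp p) p@_m * (beta m == mu)%:R.
Proof.
rewrite /Psi /mmap (big_morph (mcoeff mu) (mcoeffD mu) (mcoeff0 _ mu)).
apply: eq_bigr => m _; by rewrite /mmap1 /hh mprodXnE mcoeffCM mcoeffX.
Qed.
Lemma beta_coord m l : beta m l = (\sum_(j < n) Fm j l * m j)%N.
Proof. rewrite /beta mnm_sumE; apply: eq_bigr => j _; by rewrite mulmnE. Qed.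
End T.

Lemma sum_if (V : nmodType) (n : nat) (p : 'I_n) (F : 'I_n -> V) :
  \sum_(j < n) (if val j == val p then F j else 0) = F p.
Proof.
rewrite (bigD1 p) //= eqxx big1 ?addr0 // => j Hj.
case: eqP => // E; move: Hj; suff -> : j = p by rewrite eqxx.
by apply: val_inj.
Qed.

Section Conc.
Variable k : nat.
Hypothesis hk : (1 <= k)%N.

Local Notation n := (4 * k + 2)%N.
Lemma n_pos : (0 < n)%N. Proof. by rewrite addn2. Qed.
Definition ix (a : nat) : 'I_n := insubd (Ordinal n_pos) a.
Lemma ixK a : (a < n)%N -> val (ix a) = a.
Proof. by move=> H; rewrite /ix val_insubd H. Qed.

Lemma sum_ix (V : nmodType) (a : nat) (F : 'I_n -> V) : (a < n)%N ->
  \sum_(j < n) (if val j == a then F j else 0) = F (ix a).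
Proof. move=> H; have := sum_if (ix a) F; by rewrite ixK. Qed.

Lemma rowsum3 (w : 'cV[int]_n) (a b c : nat) :
  (a < n)%N -> (b < n)%N -> (c < n)%N -> a != b -> a != c -> b != c ->
  \sum_(j < n) ((if (val j == a) || (val j == b) then 1 else if val j == c then -1 else 0) * w j ord0)
  = w (ix a) 0 + w (ix b) 0 - w (ix c) 0.
Proof.
move=> Ha Hb Hc Hab Hac Hbc.
rewrite (eq_bigr (fun j : 'I_n => (if val j == a then w j 0 else 0) + (if val j == b then w j 0 else 0)
     - (if val j == c then w j 0 else 0))).
  by rewrite sumrB big_split /= !sum_ix.
move=> j _.
case: (eqVneq (val j) a) => E1; case: (eqVneq (val j) b) => E2;
  case: (eqVneq (val j) c) => E3; rewrite /= ?mul1r ?mulN1r ?mul0r;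
  try (by rewrite ?addr0 ?subr0 ?add0r ?sub0r);
  by move: Hab Hac Hbc; rewrite -?E1 -?E2 -?E3 ?eqxx //; lia.
Qed.

Lemma rowsum2 (w : 'cV[int]_n) (a b : nat) :
  (a < n)%N -> (b < n)%N -> a != b ->
  \sum_(j < n) ((if (val j == a) || (val j == b) then 1 else 0) * w j ord0)
  = w (ix a) 0 + w (ix b) 0.
Proof.
move=> Ha Hb Hab.
rewrite (eq_bigr (fun j : 'I_n => (if val j == a then w j 0 else 0) + (if val j == b then w j 0 else 0))).
  by rewrite big_split /= !sum_ix.
move=> j _.
case: (eqVneq (val j) a) => E1; case: (eqVneq (val j) b) => E2;
  rewrite /= ?mul1r ?mul0r;
  try (by rewrite ?addr0 ?subr0 ?add0r ?sub0r);
  by move: Hab; rewrite -?E1 -?E2 ?eqxx //; lia.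
Qed.

Lemma Arow (w : 'cV[int]_n) (r : 'I_(2*k+1)) :
  (Ak k *m w) r ord0 =
  if (r < k)%N then w (ix r) 0 + w (ix (k+r)) 0 - w (ix (4*k)) 0
  else if (r < 2*k)%N then w (ix (k+r)) 0 + w (ix (2*k+r)) 0 - w (ix (4*k).+1) 0
  else w (ix (4*k)) 0 + w (ix (4*k).+1) 0.
Proof.
have Hr := ltn_ord r.
rewrite mxE.
case: ifP => H1; [|case: ifP => H2].
- under eq_bigr do rewrite mxE H1.
  apply: rowsum3; apply/eqP || idtac; lia.
- under eq_bigr do rewrite mxE H1 H2.
  apply: rowsum3; apply/eqP || idtac; lia.
- under eq_bigr do rewrite mxE H1 H2.
  apply: rowsum2; apply/eqP || idtac; lia.
Qed.

Ltac bsplit := repeat match goal with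
  | |- context [ (?a == ?b) ] => let T := type of a in unify T nat;
      first [ have ->: (a == b) = true by apply/eqP; lia
            | have ->: (a == b) = false by apply/eqP; lia
            | case: (@eqP nat a b) => ? ]
  | |- context [ (?a < ?b)%N ] =>
      first [ have ->: (a < b)%N = true by lia
            | have ->: (a < b)%N = false by lia
            | case: (ltnP a b) => ? ]
  | |- context [ (?a <= ?b)%N ] =>
      first [ have ->: (a <= b)%N = true by lia
            | have ->: (a <= b)%N = false by lia
            | case: (leqP a b) => ? ]
  end.

Definition fa (i : nat) : 'cV[int]_n :=
  \col_(j < n) ((nat_of_bool (val j == i)%N)%:Z - (nat_of_bool (val j == k + i)%N)%:Z).
Definition fc (i : nat) : 'cV[int]_n :=
  \col_(j < n) ((nat_of_bool (val j == 2*k + i)%N)%:Z - (nat_of_bool (val j == 3*k + i)%N)%:Z).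
Definition cross : 'cV[int]_n :=
  \col_(j < n) (if ((k <= val j)%N && (val j < 2*k)%N) || (val j == 4*k)%N then 1
               else if ((3*k <= val j)%N && (val j < 4*k)%N) || (val j == (4*k).+1)%N then -1 else 0).

Lemma fa_ker i : (i < k)%N -> in_kernel (Ak k) (fa i).
Proof.
move=> Hi; apply/matrixP => r c; rewrite (ord1 c) Arow !mxE.
have Hr := ltn_ord r.
rewrite !ixK; try lia.
bsplit; simpl; lia.
Qed.

Lemma fc_ker i : (i < k)%N -> in_kernel (Ak k) (fc i).
Proof.
move=> Hi; apply/matrixP => r c; rewrite (ord1 c) Arow !mxE.
have Hr := ltn_ord r.
rewrite !ixK; try lia.
bsplit; simpl; lia.
Qed.

Lemma cross_ker : in_kernel (Ak k) cross.
Proof.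
apply/matrixP => r c; rewrite (ord1 c) Arow !mxE.
have Hr := ltn_ord r.
rewrite !ixK; try lia.
bsplit; simpl; lia.
Qed.

Definition vcoord (sd : bool) (f : nat -> bool) (j : nat) : bool :=
  if (j < k)%N then sd && ~~ f j
  else if (j < 2*k)%N then sd && f (j - k)%N
  else if (j < 3*k)%N then ~~ sd && ~~ f (j - 2*k)%N
  else if (j < 4*k)%N then ~~ sd && f (j - 3*k)%N
  else if (j == 4*k)%N then sd else ~~ sd.

Definition vx sd f : 'cV[int]_n := \col_(j < n) (nat_of_bool (vcoord sd f (val j)))%:Z.

Lemma vc_a sd f i : (i < k)%N -> vcoord sd f i = sd && ~~ f i.
Proof. by move=> H; rewrite /vcoord H. Qed.
Lemma vc_b sd f i : (i < k)%N -> vcoord sd f (k + i) = sd && f i.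
Proof.
move=> H; rewrite /vcoord.
have ->: (k + i < k)%N = false by lia.
have ->: (k + i < 2 * k)%N = true by lia.
by rewrite addKn.
Qed.
Lemma vc_c sd f i : (i < k)%N -> vcoord sd f (2 * k + i) = ~~ sd && ~~ f i.
Proof.
move=> H; rewrite /vcoord.
have ->: (2 * k + i < k)%N = false by lia.
have ->: (2 * k + i < 2 * k)%N = false by lia.
have ->: (2 * k + i < 3 * k)%N = true by lia.
by rewrite addKn.
Qed.
Lemma vc_d sd f i : (i < k)%N -> vcoord sd f (3 * k + i) = ~~ sd && f i.
Proof.
move=> H; rewrite /vcoord.
have ->: (3 * k + i < k)%N = false by lia.
have ->: (3 * k + i < 2 * k)%N = false by lia.
have ->: (3 * k + i < 3 * k)%N = false by lia.
have ->: (3 * k + i < 4 * k)%N = true by lia.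
by rewrite addKn.
Qed.
Lemma vc_s sd f : vcoord sd f (4 * k) = sd.
Proof.
rewrite /vcoord.
have ->: (4 * k < k)%N = false by lia.
have ->: (4 * k < 2 * k)%N = false by lia.
have ->: (4 * k < 3 * k)%N = false by lia.
have ->: (4 * k < 4 * k)%N = false by lia.
by rewrite eqxx.
Qed.
Lemma vc_t sd f : vcoord sd f (4 * k).+1 = ~~ sd.
Proof.
rewrite /vcoord.
have ->: ((4 * k).+1 < k)%N = false by lia.
have ->: ((4 * k).+1 < 2 * k)%N = false by lia.
have ->: ((4 * k).+1 < 3 * k)%N = false by lia.
have ->: ((4 * k).+1 < 4 * k)%N = false by lia.
have ->: ((4 * k).+1 == 4 * k) = false by lia.
done.
Qed.

Lemma split_idx (j : nat) : (j < n)%N ->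
  (exists2 i, (i < k)%N & j = i) \/
  (exists2 i, (i < k)%N & j = (k + i)%N) \/
  (exists2 i, (i < k)%N & j = (2 * k + i)%N) \/
  (exists2 i, (i < k)%N & j = (3 * k + i)%N) \/
  j = (4 * k)%N \/ j = (4 * k).+1.
Proof.
move=> Hj.
case: (ltnP j k) => H1; first by left; exists j.
case: (ltnP j (2*k)) => H2; first by right; left; exists (j - k)%N; lia.
case: (ltnP j (3*k)) => H3; first by do 2 right; left; exists (j - 2*k)%N; lia.
case: (ltnP j (4*k)) => H4; first by do 3 right; left; exists (j - 3*k)%N; lia.
do 4 right; lia.
Qed.

Lemma vx_ext sd f g : (forall i, (i < k)%N -> f i = g i) -> vx sd f = vx sd g.
Proof.
move=> H; apply/matrixP => j c; rewrite !mxE.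
case: j => j Hj /=.
case: (split_idx Hj) => [[i Hi ->]|[[i Hi ->]|[[i Hi ->]|[[i Hi ->]|[->|->]]]]];
  by rewrite ?(vc_a _ _ Hi) ?(vc_b _ _ Hi) ?(vc_c _ _ Hi) ?(vc_d _ _ Hi) ?vc_s ?vc_t ?H.
Qed.


Definition V0 := fiber (Ak k) (e_last k).

Lemma fiber_vx sd f : V0 (vx sd f).
Proof.
split; first by move=> i; rewrite mxE.
apply/matrixP => r c; rewrite (ord1 c) Arow !mxE.
have Hr := ltn_ord r.
rewrite !ixK; try lia.
case: ifP => H1; [|case: ifP => H2].
- rewrite (vc_a _ _ H1) (vc_b _ _ H1) vc_s.
  have ->: (r == 2 * k :> nat) = false by apply/eqP; lia.
  by case: sd; case: (f r).
- have E1 : (k + r = 2 * k + (r - k))%N by lia.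
  have E2 : (2 * k + r = 3 * k + (r - k))%N by lia.
  have Hi : (r - k < k)%N by lia.
  rewrite E1 E2 (vc_c _ _ Hi) (vc_d _ _ Hi) vc_t.
  have ->: (r == 2 * k :> nat) = false by apply/eqP; lia.
  by case: sd; case: (f (r - k)%N).
- rewrite vc_s vc_t.
  have ->: (r == 2 * k :> nat) = true by apply/eqP; lia.
  by case: sd.
Qed.


Lemma r_pos : (0 < 2 * k + 1)%N. Proof. by rewrite addn1. Qed.
Definition rx (a : nat) : 'I_(2 * k + 1) := insubd (Ordinal r_pos) a.
Lemma rxK a : (a < 2 * k + 1)%N -> val (rx a) = a.
Proof. by move=> H; rewrite /rx val_insubd H. Qed.

Lemma ord_ix j (Hj : (j < n)%N) : Ordinal Hj = ix j.
Proof. by apply: val_inj; rewrite /= ixK. Qed.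

Lemma fib_eqs u : V0 u ->
 (forall i, (i < k)%N -> u (ix i) 0 + u (ix (k+i)) 0 = u (ix (4*k)) 0) /\
 (forall i, (i < k)%N -> u (ix (2*k+i)) 0 + u (ix (3*k+i)) 0 = u (ix (4*k).+1) 0) /\
 u (ix (4*k)) 0 + u (ix (4*k).+1) 0 = 1.
Proof.
move=> [_ H]; split; [|split].
- move=> i Hi; move/matrixP: H => /(_ (rx i) ord0); rewrite Arow !mxE rxK; last lia.
  rewrite Hi; have ->: (i == 2 * k) = false by apply/eqP; lia.
  by move/eqP; rewrite subr_eq0 => /eqP.
- move=> i Hi; move/matrixP: H => /(_ (rx (k + i)) ord0); rewrite Arow !mxE rxK; last lia.
  have ->: (k + i < k)%N = false by lia.
  have ->: (k + i < 2 * k)%N = true by lia.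
  have ->: (k + i == 2 * k) = false by apply/eqP; lia.
  have ->: (k + (k + i) = 2 * k + i)%N by lia.
  have ->: (2 * k + (k + i) = 3 * k + i)%N by lia.
  by move/eqP; rewrite subr_eq0 => /eqP.
- move/matrixP: H => /(_ (rx (2 * k)) ord0); rewrite Arow !mxE rxK; last lia.
  have ->: (2 * k < k)%N = false by lia.
  have ->: (2 * k < 2 * k)%N = false by lia.
  by rewrite eqxx.
Qed.

Lemma fiber_inv u : V0 u -> exists sd f, u = vx sd f.
Proof.
move=> Hu; have [H1 [H2 H3]] := fib_eqs Hu.
have [H0 _] := Hu.
exists (u (ix (4*k)) 0 == 1), (fun i => if u (ix (4*k)) 0 == 1 then u (ix (k+i)) 0 == 1 else u (ix (3*k+i)) 0 == 1).
apply/matrixP => j c; rewrite (ord1 c) !mxE.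
case: j => j Hj /=; rewrite ord_ix.
have Hs := H0 (ix (4*k)); have Ht := H0 (ix (4*k).+1).
case: (split_idx Hj) => [[i Hi ->]|[[i Hi ->]|[[i Hi ->]|[[i Hi ->]|[->|->]]]]];
  rewrite ?(vc_a _ _ Hi) ?(vc_b _ _ Hi) ?(vc_c _ _ Hi) ?(vc_d _ _ Hi) ?vc_s ?vc_t.
- have := H1 _ Hi; have := H0 (ix i); have := H0 (ix (k+i)).
  case: eqP => Es; case: eqP => Eb /=; lia.
- have := H1 _ Hi; have := H0 (ix i); have := H0 (ix (k+i)).
  case: eqP => Es; case: eqP => Eb /=; lia.
- have := H2 _ Hi; have := H0 (ix (2*k+i)); have := H0 (ix (3*k+i)).
  case: eqP => Es; case: eqP => Eb /=; lia.
- have := H2 _ Hi; have := H0 (ix (2*k+i)); have := H0 (ix (3*k+i)).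
  case: eqP => Es; case: eqP => Eb /=; lia.
- case: eqP => Es /=; lia.
- case: eqP => Es /=; lia.
Qed.


Lemma sum_ixN (a : nat) (F : 'I_n -> nat) : (a < n)%N ->
  (\sum_(j < n) (if val j == a then F j else 0))%N = F (ix a).
Proof.
move=> H; rewrite (bigD1 (ix a)) //= ixK // eqxx big1 ?addn0 // => j Hj.
case: eqP => // E; move: Hj; suff -> : j = ix a by rewrite eqxx.
by apply: val_inj; rewrite ixK.
Qed.

Lemma nsum3 (x : 'I_n -> nat) (a b c : nat) :
  (a < n)%N -> (b < n)%N -> (c < n)%N -> a != b -> a != c -> b != c ->
  (\sum_(j < n) nat_of_bool [|| val j == a, val j == b | val j == c] * x j)%N
  = (x (ix a) + x (ix b) + x (ix c))%N.
Proof.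
move=> Ha Hb Hc Hab Hac Hbc.
rewrite (eq_bigr (fun j : 'I_n => (if val j == a then x j else 0) + (if val j == b then x j else 0)
     + (if val j == c then x j else 0))%N).
  by rewrite !big_split /= !sum_ixN.
move=> j _.
case: (eqVneq (val j) a) => E1; case: (eqVneq (val j) b) => E2;
  case: (eqVneq (val j) c) => E3; rewrite /= ?mul1n ?mul0n ?addn0 ?add0n //;
  by move: Hab Hac Hbc; rewrite -?E1 -?E2 -?E3 ?eqxx //; lia.
Qed.

Lemma nsum2 (x : 'I_n -> nat) (a b : nat) :
  (a < n)%N -> (b < n)%N -> a != b ->
  (\sum_(j < n) nat_of_bool ((val j == a) || (val j == b)) * x j)%N
  = (x (ix a) + x (ix b))%N.
Proof.
move=> Ha Hb Hab.
rewrite (eq_bigr (fun j : 'I_n => (if val j == a then x j else 0) + (if val j == b then x j else 0))%N).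
  by rewrite !big_split /= !sum_ixN.
move=> j _.
case: (eqVneq (val j) a) => E1; case: (eqVneq (val j) b) => E2;
  rewrite /= ?mul1n ?mul0n ?addn0 ?add0n //;
  by move: Hab; rewrite -?E1 -?E2 ?eqxx //; lia.
Qed.

Local Notation N := (2 * k + 1)%N.

Definition Bentry (l j : nat) : bool :=
  if (l < k)%N then [|| j == l, j == k + l | j == (4*k).+1]%N
  else if (l < 2*k)%N then [|| j == k + l, j == 2*k + l | j == 4*k]%N
  else ((j == 4*k) || (j == (4*k).+1))%N.

Definition Fm (j : 'I_n) : 'X_{1..N} := [multinom (nat_of_bool (Bentry (val l) (val j))) | l < N].

Definition bt := beta Fm.

Lemma bt_theta m i : (i < k)%N -> bt m (rx i) = (m (ix i) + m (ix (k+i)) + m (ix (4*k).+1))%N.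
Proof.
move=> Hi; rewrite /bt beta_coord.
rewrite (eq_bigr (fun j : 'I_n => nat_of_bool [|| val j == i, val j == k + i | val j == (4*k).+1] * m j)%N); last first.
  by move=> j _; rewrite mnmE rxK /Bentry ?Hi //; lia.
apply: nsum3; try apply/eqP; lia.
Qed.

Lemma bt_eta m i : (i < k)%N -> bt m (rx (k + i)) = (m (ix (2*k+i)) + m (ix (3*k+i)) + m (ix (4*k)))%N.
Proof.
move=> Hi; rewrite /bt beta_coord.
have E1 : (k + i < k)%N = false by lia.
have E2 : (k + i < 2 * k)%N = true by lia.
rewrite (eq_bigr (fun j : 'I_n => nat_of_bool [|| val j == 2 * k + i, val j == 3 * k + i | val j == (4*k)] * m j)%N); last first.
  move=> j _; rewrite mnmE rxK /Bentry ?E1 ?E2; last lia.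
  have ->: (k + (k + i) = 2 * k + i)%N by lia.
  by have ->: (2 * k + (k + i) = 3 * k + i)%N by lia.
apply: nsum3; try apply/eqP; lia.
Qed.

Lemma bt_lam m : bt m (rx (2 * k)) = (m (ix (4*k)) + m (ix (4*k).+1))%N.
Proof.
rewrite /bt beta_coord.
have E1 : (2 * k < k)%N = false by lia.
have E2 : (2 * k < 2 * k)%N = false by lia.
rewrite (eq_bigr (fun j : 'I_n => nat_of_bool ((val j == 4 * k) || (val j == (4*k).+1)) * m j)%N); last first.
  by move=> j _; rewrite mnmE rxK /Bentry ?E1 ?E2 //; lia.
apply: nsum2; try apply/eqP; lia.
Qed.

Lemma bt_eq (m m' : 'X_{1..n}) :
  (forall i, (i < k)%N -> (m (ix i) + m (ix (k+i)) + m (ix (4*k).+1) = m' (ix i) + m' (ix (k+i)) + m' (ix (4*k).+1))%N) ->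
  (forall i, (i < k)%N -> (m (ix (2*k+i)) + m (ix (3*k+i)) + m (ix (4*k)) = m' (ix (2*k+i)) + m' (ix (3*k+i)) + m' (ix (4*k)))%N) ->
  (m (ix (4*k)) + m (ix (4*k).+1) = m' (ix (4*k)) + m' (ix (4*k).+1))%N ->
  bt m = bt m'.
Proof.
move=> H1 H2 H3; apply/mnmP => l.
have Hl := ltn_ord l.
case: (ltnP l k) => L1.
  have -> : l = rx l by apply: val_inj; rewrite rxK.
  by rewrite !bt_theta ?H1 // rxK.
case: (ltnP l (2 * k)) => L2.
  have -> : l = rx (k + (l - k)) by apply: val_inj => /=; rewrite rxK; lia.
  by rewrite !bt_eta ?H2 //; lia.
have -> : l = rx (2 * k) by apply: val_inj => /=; rewrite rxK; lia.
by rewrite !bt_lam.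
Qed.


Lemma ker_eqs w : in_kernel (Ak k) w ->
 (forall i, (i < k)%N -> w (ix i) 0 + w (ix (k+i)) 0 - w (ix (4*k)) 0 = 0) /\
 (forall i, (i < k)%N -> w (ix (2*k+i)) 0 + w (ix (3*k+i)) 0 - w (ix (4*k).+1) 0 = 0) /\
 w (ix (4*k)) 0 + w (ix (4*k).+1) 0 = 0.
Proof.
move=> H; split; [|split].
- move=> i Hi; move/matrixP: H => /(_ (rx i) ord0); rewrite Arow !mxE rxK; last lia.
  by rewrite Hi.
- move=> i Hi; move/matrixP: H => /(_ (rx (k + i)) ord0); rewrite Arow !mxE rxK; last lia.
  have ->: (k + i < k)%N = false by lia.
  have ->: (k + i < 2 * k)%N = true by lia.
  have ->: (k + (k + i) = 2 * k + i)%N by lia.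
  by have ->: (2 * k + (k + i) = 3 * k + i)%N by lia.
- move/matrixP: H => /(_ (rx (2 * k)) ord0); rewrite Arow !mxE rxK; last lia.
  have ->: (2 * k < k)%N = false by lia.
  by have ->: (2 * k < 2 * k)%N = false by lia.
Qed.

Lemma bt_binom w : in_kernel (Ak k) w -> bt (posp w) = bt (negp w).
Proof.
move=> H; have [H1 [H2 H3]] := ker_eqs H.
have PN : forall i, (posp w i)%:Z - (negp w i)%:Z = w i 0 := posp_negp w.
apply: bt_eq.
- move=> i Hi; have := H1 _ Hi.
  have := PN (ix i); have := PN (ix (k+i)); have := PN (ix (4*k)); have := PN (ix (4*k).+1).
  move=> *; suff E : ((posp w (ix i) + posp w (ix (k + i)) + posp w (ix (4 * k).+1))%N%:Z =
     (negp w (ix i) + negp w (ix (k + i)) + negp w (ix (4 * k).+1))%N%:Z) by case: E.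
  rewrite !PoszD; lia.
- move=> i Hi; have := H2 _ Hi.
  have := PN (ix (2*k+i)); have := PN (ix (3*k+i)); have := PN (ix (4*k)); have := PN (ix (4*k).+1).
  move=> *; suff E : ((posp w (ix (2*k+i)) + posp w (ix (3*k + i)) + posp w (ix (4 * k)))%N%:Z =
     (negp w (ix (2*k+i)) + negp w (ix (3*k + i)) + negp w (ix (4 * k)))%N%:Z) by case: E.
  rewrite !PoszD; lia.
- have := PN (ix (4*k)); have := PN (ix (4*k).+1).
  move=> *; suff E : ((posp w (ix (4 * k)) + posp w (ix (4 * k).+1))%N%:Z =
     (negp w (ix (4 * k)) + negp w (ix (4 * k).+1))%N%:Z) by case: E.
  rewrite !PoszD; lia.
Qed.

Lemma Psi_I (K : fieldType) (f : {mpoly K[n]}) : toric_ideal (Ak k) f -> Psi Fm f = 0.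
Proof.
move=> [s [Hs ->]]; rewrite Psi_sum big_seq big1 // => x Hx.
by rewrite Psi_M /binom Psi_B !Psi_X; have := bt_binom (Hs _ Hx); rewrite /bt => ->; rewrite subrr mulr0.
Qed.


Definition standard (m : 'X_{1..n}) : Prop :=
  [/\ (forall i, (i < k)%N -> m (ix i) = 0%N),
      (forall i, (i < k)%N -> m (ix (2*k+i)) = 0%N) &
      ~ ((0 < m (ix (4*k)))%N /\ forall i, (i < k)%N -> (0 < m (ix (k+i)))%N)].

Lemma ix_val (j : 'I_n) : ix (val j) = j.
Proof. by apply: val_inj; rewrite ixK ?ltn_ord. Qed.

Lemma comb (m m' : 'X_{1..n}) : bt m = bt m' -> m != m' -> standard m' -> lex_lt m' m.
Proof.
move=> Hb Hne [Sa Sc Sn].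
have H1 : forall i, (i < k)%N -> (m (ix i) + m (ix (k+i)) + m (ix (4*k).+1) = m' (ix i) + m' (ix (k+i)) + m' (ix (4*k).+1))%N.
  by move=> i Hi; rewrite -!bt_theta // Hb.
have H2 : forall i, (i < k)%N -> (m (ix (2*k+i)) + m (ix (3*k+i)) + m (ix (4*k)) = m' (ix (2*k+i)) + m' (ix (3*k+i)) + m' (ix (4*k)))%N.
  by move=> i Hi; rewrite -!bt_eta // Hb.
have H3 : (m (ix (4*k)) + m (ix (4*k).+1) = m' (ix (4*k)) + m' (ix (4*k).+1))%N.
  by rewrite -!bt_lam Hb.
case: (boolP [exists i : 'I_k, (0 < m (ix i))%N]) => [/existsP [i0 Hi0]|/existsP HA].
  have ex : exists i, (i < k)%N && (0 < m (ix i))%N by exists i0; rewrite ltn_ord.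
  case: (ex_minnP ex) => i /andP [Hik Hpos] Hmin.
  exists (ix i); split; last by rewrite Sa.
  move=> j; rewrite ixK; last lia.
  move=> Hj; rewrite -(ix_val j) Sa; last exact: ltn_trans Hj Hik.
  case: (posnP (m (ix (val j)))) => // Hp.
  have := Hmin (val j); rewrite Hp andbT => /(_ (ltn_trans Hj Hik)) H.
  by have := leq_ltn_trans H Hj; rewrite ltnn.
have A0 : forall i, (i < k)%N -> m (ix i) = 0%N.
  move=> i Hi; case: (posnP (m (ix i))) => // Hp; case: HA; exists (Ordinal Hi); by [].
have H1' : forall i, (i < k)%N -> (m (ix (k+i)) + m (ix (4*k).+1) = m' (ix (k+i)) + m' (ix (4*k).+1))%N.
  by move=> i Hi; have := H1 _ Hi; rewrite A0 // Sa //.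
have Hk0 : (0 < k)%N := hk.
case: (ltngtP (m' (ix (k + 0))) (m (ix (k + 0)))) => Hb0.
-
  exists (ix (k + 0)); split => //.
  move=> j; rewrite ixK; last lia.
  case: j => j Hj /= Hjk; rewrite ord_ix Sa ?A0 //; lia.
-
  exfalso; apply: Sn; split.
  + have := H1' _ Hk0; lia.
  + move=> i Hi; have := H1' _ Hi; have := H1' _ Hk0; lia.
-
  have Et : m (ix (4*k).+1) = m' (ix (4*k).+1) by have := H1' _ Hk0; lia.
  have Es : m (ix (4*k)) = m' (ix (4*k)) by lia.
  have Eb : forall i, (i < k)%N -> m (ix (k+i)) = m' (ix (k+i)).
    by move=> i Hi; have := H1' _ Hi; lia.
  case: (boolP [exists i : 'I_k, (0 < m (ix (2*k+i)))%N]) => [/existsP [i0 Hi0]|/existsP HC].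
    have ex : exists i, (i < k)%N && (0 < m (ix (2*k+i)))%N by exists i0; rewrite ltn_ord.
    case: (ex_minnP ex) => i /andP [Hik Hpos] Hmin.
    exists (ix (2*k+i)); split; last by rewrite Sc.
    move=> j; rewrite ixK; last lia.
    case: j => j Hj /=; rewrite ord_ix.
    case: (split_idx Hj) => [[i' Hi' ->]|[[i' Hi' ->]|[[i' Hi' ->]|[[i' Hi' ->]|[->|->]]]]] Hji; try lia.
    * by rewrite Sa ?A0.
    * by rewrite Eb.
    * rewrite Sc //; case: (posnP (m (ix (2*k+i')))) => // Hp.
      have := Hmin i'; rewrite Hp Hi' => /(_ isT); lia.
  have C0 : forall i, (i < k)%N -> m (ix (2*k+i)) = 0%N.
    move=> i Hi; case: (posnP (m (ix (2*k+i)))) => // Hp; case: HC; exists (Ordinal Hi); by [].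
  case/eqP: Hne; apply/mnmP => j.
  case: j => j Hj; rewrite ord_ix.
  case: (split_idx Hj) => [[i' Hi' ->]|[[i' Hi' ->]|[[i' Hi' ->]|[[i' Hi' ->]|[->|->]]]]] //.
  * by rewrite Sa ?A0.
  * by rewrite Eb.
  * by rewrite Sc ?C0.
  * by have := H2 _ Hi'; rewrite C0 ?Sc // Es; lia.
Qed.


Lemma posp1 (w : 'cV[int]_n) j : w j 0 = 1 -> posp w j = 1%N.
Proof.
move=> H; have E : (posp w j)%:Z = Num.max (w j 0) 0 := posp_coord w j.
by move: E; rewrite H max_l // => -[].
Qed.
Lemma posp0 (w : 'cV[int]_n) j : w j 0 <= 0 -> posp w j = 0%N.
Proof.
move=> H; have E : (posp w j)%:Z = Num.max (w j 0) 0 := posp_coord w j.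
by move: E; rewrite max_r // => -[].
Qed.
Lemma negp1 (w : 'cV[int]_n) j : w j 0 = -1 -> negp w j = 1%N.
Proof.
move=> H; have E : (negp w j)%:Z = Num.max (- w j 0) 0 := negp_coord w j.
by move: E; rewrite H opprK max_l // => -[].
Qed.
Lemma negp0 (w : 'cV[int]_n) j : 0 <= w j 0 -> negp w j = 0%N.
Proof.
move=> H; have E : (negp w j)%:Z = Num.max (- w j 0) 0 := negp_coord w j.
by move: E; rewrite max_r ?oppr_le0 // => -[].
Qed.


Lemma fa_at i j : (j < n)%N -> fa i (ix j) 0 = (nat_of_bool (j == i)%N)%:Z - (nat_of_bool (j == k + i)%N)%:Z.
Proof. by move=> H; rewrite mxE ixK. Qed.
Lemma fc_at i j : (j < n)%N -> fc i (ix j) 0 = (nat_of_bool (j == 2*k+i)%N)%:Z - (nat_of_bool (j == 3*k + i)%N)%:Z.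
Proof. by move=> H; rewrite mxE ixK. Qed.
Lemma cross_at j : (j < n)%N -> cross (ix j) 0 =
  if ((k <= j)%N && (j < 2*k)%N) || (j == 4*k)%N then 1
  else if ((3*k <= j)%N && (j < 4*k)%N) || (j == (4*k).+1)%N then -1 else 0.
Proof. by move=> H; rewrite mxE ixK. Qed.

Lemma lex_of (w : 'cV[int]_n) (idx : nat) : (idx < n)%N ->
  (forall j, (j < idx)%N -> w (ix j) 0 = 0) -> w (ix idx) 0 = 1 -> lex_lt (negp w) (posp w).
Proof.
move=> Hi H H1; exists (ix idx); split.
- move=> j; rewrite ixK // => Hj; rewrite -(ix_val j).
  rewrite posp0 ?negp0 ?H //.
- by rewrite posp1 // negp0 // H1.
Qed.

Lemma nz_of (w : 'cV[int]_n) j : w j 0 = 1 -> w != 0.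
Proof. by move=> H; apply/negP => /eqP E; move: H; rewrite E mxE. Qed.

Definition W0 : seq 'cV[int]_n :=
  [seq fa i | i <- iota 0 k] ++ [seq fc i | i <- iota 0 k] ++ [:: cross].

Lemma W0P w : w \in W0 ->
  (exists2 i, (i < k)%N & w = fa i) \/ (exists2 i, (i < k)%N & w = fc i) \/ w = cross.
Proof.
rewrite !mem_cat => /orP [/mapP [i Hi ->]|/orP [/mapP [i Hi ->]|]].
- by left; exists i => //; move: Hi; rewrite mem_iota.
- by right; left; exists i => //; move: Hi; rewrite mem_iota.
- by rewrite inE => /eqP ->; right; right.
Qed.

Lemma fa_in i : (i < k)%N -> fa i \in W0.
Proof. by move=> H; rewrite mem_cat; apply/orP; left; apply: map_f; rewrite mem_iota. Qed.
Lemma fc_in i : (i < k)%N -> fc i \in W0.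
Proof. by move=> H; rewrite !mem_cat; apply/orP; right; apply/orP; left; apply: map_f; rewrite mem_iota. Qed.
Lemma cross_in : cross \in W0.
Proof. by rewrite !mem_cat inE eqxx !orbT. Qed.

Lemma W0_facts w : w \in W0 ->
  [/\ in_kernel (Ak k) w, w != 0, lex_lt (negp w) (posp w) &
     exists j, (0 < posp w j)%N /\ forall w', w' \in W0 -> w' j 0 != 0 -> w' = w].
Proof.
move=> /W0P [[i Hi ->]|[[i Hi ->]|->]].
- have H1 : fa i (ix i) 0 = 1 by rewrite fa_at; [bsplit; simpl; lia|lia].
  split; [exact: fa_ker | exact: nz_of H1 | |].
  + apply: (lex_of (idx := i)) => //; first lia.
    by move=> j Hj; rewrite fa_at; [bsplit; simpl; lia|lia].
  + exists (ix i); split; first by rewrite posp1.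
    move=> w' /W0P [[i' Hi' ->]|[[i' Hi' ->]|->]]; rewrite ?fa_at ?fc_at ?cross_at; try lia;
      bsplit; simpl; try lia; try (by move=> _; congr fa; lia); try (by move=> _; congr fc; lia); by [].
- have H1 : fc i (ix (2*k+i)) 0 = 1 by rewrite fc_at; [bsplit; simpl; lia|lia].
  split; [exact: fc_ker | exact: nz_of H1 | |].
  + apply: (lex_of (idx := (2*k+i)%N)) => //; first lia.
    by move=> j Hj; rewrite fc_at; [bsplit; simpl; lia|lia].
  + exists (ix (2*k+i)); split; first by rewrite posp1.
    move=> w' /W0P [[i' Hi' ->]|[[i' Hi' ->]|->]]; rewrite ?fa_at ?fc_at ?cross_at; try lia;
      bsplit; simpl; try lia; try (by move=> _; congr fa; lia); try (by move=> _; congr fc; lia); by [].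
- have H1 : cross (ix (4*k)) 0 = 1 by rewrite cross_at; [bsplit; simpl; lia|lia].
  split; [exact: cross_ker | exact: nz_of H1 | |].
  + apply: (lex_of (idx := k)) => //; first lia.
      by move=> j Hj; rewrite cross_at; [bsplit; simpl; lia|lia].
    by rewrite cross_at; [bsplit; simpl; lia|lia].
  + exists (ix (4*k)); split; first by rewrite posp1.
    move=> w' /W0P [[i' Hi' ->]|[[i' Hi' ->]|->]]; rewrite ?fa_at ?fc_at ?cross_at; try lia;
      bsplit; simpl; try lia; try (by move=> _; congr fa; lia); try (by move=> _; congr fc; lia); by [].
Qed.


Section GB.
Variable K : fieldType.

Definition G0 : seq {mpoly K[n]} := map (@binom K n) W0.

Lemma G0_rgb : reduced_groebner_basis (@toric_ideal K _ _ (Ak k)) G0.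
Proof.
split.
- move=> g /mapP [w Hw ->]; have [Hk Hnz _ _] := W0_facts Hw.
  split; [exact: kernel_toric | exact: binom_neq0].
- move=> f Hf Hnz mf Hl.
  case: (boolP [exists i : 'I_k, (0 < mf (ix i))%N]) => [/existsP [i Hi] | /existsP HA].
    have Hw := fa_in (ltn_ord i); have [_ Hnz' Hlt _] := W0_facts Hw.
    exists (binom K (fa i)), (posp (fa i)); split; [exact: map_f|exact: binom_lead|].
    have Hik := ltn_ord i.
    move=> j; rewrite -(ix_val j); case: (eqVneq (val j) i) => E.
    + rewrite E posp1 //; rewrite fa_at; [bsplit; simpl; lia|lia].
    + rewrite posp0 //; rewrite fa_at; [bsplit; simpl; lia|apply: ltn_ord].
  case: (boolP [exists i : 'I_k, (0 < mf (ix (2*k+i)))%N]) => [/existsP [i Hi] | /existsP HC].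
    have Hw := fc_in (ltn_ord i); have [_ Hnz' Hlt _] := W0_facts Hw.
    exists (binom K (fc i)), (posp (fc i)); split; [exact: map_f|exact: binom_lead|].
    have Hik := ltn_ord i.
    move=> j; rewrite -(ix_val j); case: (eqVneq (val j) (2*k+i)%N) => E.
    + rewrite E posp1 //; rewrite fc_at; [bsplit; simpl; lia|lia].
    + rewrite posp0 //; rewrite fc_at; [bsplit; simpl; lia|apply: ltn_ord].
  case: (boolP ((0 < mf (ix (4*k)))%N && [forall i : 'I_k, (0 < mf (ix (k+i)))%N])) => [/andP [H1 /forallP H2]|HB].
    have [_ Hnz' Hlt _] := W0_facts cross_in.
    exists (binom K cross), (posp cross); split; [exact: map_f cross_in|exact: binom_lead|].
    move=> j; case: j => j Hj; rewrite ord_ix.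
    case: (split_idx Hj) => [[i' Hi' ->]|[[i' Hi' ->]|[[i' Hi' ->]|[[i' Hi' ->]|[->|->]]]]].
    + rewrite posp0 //; rewrite cross_at; [bsplit; simpl; lia|lia].
    + rewrite posp1; first exact: (H2 (Ordinal Hi')).
      rewrite cross_at; [bsplit; simpl; lia|lia].
    + rewrite posp0 //; rewrite cross_at; [bsplit; simpl; lia|lia].
    + rewrite posp0 //; rewrite cross_at; [bsplit; simpl; lia|lia].
    + rewrite posp1 //; rewrite cross_at; [bsplit; simpl; lia|lia].
    + rewrite posp0 //; rewrite cross_at; [bsplit; simpl; lia|lia].
  exfalso.
  have Hs : standard mf.
    split.
    + move=> i Hi; case: (posnP (mf (ix i))) => // Hp; case: HA; by exists (Ordinal Hi).
    + move=> i Hi; case: (posnP (mf (ix (2*k+i)))) => // Hp; case: HC; by exists (Ordinal Hi).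
    + move=> [H1 H2]; move/negP: HB; apply; rewrite H1 /=; apply/forallP => i; exact: H2.
  have E := @Psi_I K f Hf.
  have Hc : (Psi Fm f)@_(bt mf) = f@_mf.
    rewrite Psi_coef (bigD1_seq mf) ?msupp_uniq //=; last exact: Hl.1.
    rewrite eqxx mulr1 big_seq_cond big1 ?addr0 // => m /andP [Hm Hne].
    case: eqP => [Eb|]; last by rewrite mulr0.
    have Hlt := comb Eb Hne Hs.
    case: (Hl.2 _ Hm) => [Em|Hlt'].
      by move: Hne; rewrite Em eqxx.
    by case: (lex_lt_asym Hlt Hlt').
  move: Hc; rewrite E mcoeff0 => /esym/eqP.
  have := Hl.1; rewrite mcoeff_msupp => /negbTE ->; done.
- move=> g mg /mapP [w Hw ->] Hl; have [_ Hnz Hlt _] := W0_facts Hw.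
  by rewrite -(is_lead_uniq (binom_lead K Hnz Hlt) Hl) binom_lead_coef.
- move=> g g' mg /mapP [w Hw ->] /mapP [w' Hw' ->] Hne Hl m Hm Hdiv.
  have [_ Hnz Hlt [j [Hj Hu]]] := W0_facts Hw.
  have E := is_lead_uniq (binom_lead K Hnz Hlt) Hl; subst mg.
  have Hmj : (0 < m j)%N := leq_trans Hj (Hdiv j).
  have [_ Hnz' _ _] := W0_facts Hw'.
  have Hw'j : w' j 0 != 0.
    apply/negP => /eqP H0; move: Hm; rewrite msupp_binom // => /orP [/eqP Em|/eqP Em];
    move: Hmj; rewrite Em ?posp0 ?negp0 ?H0 //.
  by move: Hne; rewrite (Hu _ Hw' Hw'j) eqxx.
Qed.

Lemma RW0 w : w \in W0 -> R_lex K (Ak k) w.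
Proof.
move=> Hw; have [_ Hnz Hlt _] := W0_facts Hw.
exists G0; split; first exact: G0_rgb.
split; [exact: map_f|exact: binom_lead].
Qed.

End GB.


Definition tog (f : nat -> bool) (i : nat) : nat -> bool := fun j => if j == i then ~~ f j else f j.
Definition allT : nat -> bool := fun _ => true.
Definition allF : nat -> bool := fun _ => false.

Lemma vx_tog_diff sd f i : (i < k)%N -> f i = false ->
  vx sd f - vx sd (tog f i) = if sd then fa i else fc i.
Proof.
move=> Hi Hf; case: sd; apply/matrixP => j c; rewrite (ord1 c) !mxE;
case: j => j Hj /=;
case: (split_idx Hj) => [[i' Hi' ->]|[[i' Hi' ->]|[[i' Hi' ->]|[[i' Hi' ->]|[->|->]]]]];
  rewrite ?(vc_a _ _ Hi') ?(vc_b _ _ Hi') ?(vc_c _ _ Hi') ?(vc_d _ _ Hi') ?vc_s ?vc_t /tog;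
  try (case: (eqVneq i' i) => [->|Hne]; rewrite ?eqxx ?Hf ?(negbTE Hne));
  bsplit; simpl; lia.
Qed.

Lemma vx_cross : vx true allT - vx false allT = cross.
Proof.
apply/matrixP => j c; rewrite (ord1 c) !mxE.
case: j => j Hj /=.
case: (split_idx Hj) => [[i' Hi' ->]|[[i' Hi' ->]|[[i' Hi' ->]|[[i' Hi' ->]|[->|->]]]]];
  rewrite ?(vc_a _ _ Hi') ?(vc_b _ _ Hi') ?(vc_c _ _ Hi') ?(vc_d _ _ Hi') ?vc_s ?vc_t /allT /=;
  bsplit; simpl; lia.
Qed.

Lemma tog_tog f i : forall j, tog (tog f i) i j = f j.
Proof. by move=> j; rewrite /tog; case: (eqVneq j i) => [->|H]; rewrite ?eqxx ?negbK // (negbTE H). Qed.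

Lemma tog_self f i : tog f i i = ~~ f i.
Proof. by rewrite /tog eqxx. Qed.

Section Adj.
Variable K : fieldType.
Local Notation RL := (R_lex K (Ak k)).
Local Notation E := (fiber_adj RL).

Lemma adj_sym u v : E u v -> E v u.
Proof. by move=> [H1 H2]; split; [move=> E1; apply: H1|tauto]. Qed.

Lemma adj_tog sd f i : (i < k)%N -> E (vx sd f) (vx sd (tog f i)).
Proof.
move=> Hi.
wlog Hf : f / f i = false.
  move=> W; case Hfi: (f i); last exact: W.
  have := W (tog f i); rewrite tog_self Hfi => /(_ erefl) H.
  rewrite (@vx_ext sd _ f (fun j _ => tog_tog f i j)) in H; exact: adj_sym.
have D := vx_tog_diff sd Hi Hf.
have Hw : (if sd then fa i else fc i) \in W0 by case: sd {D}; [apply: fa_in|apply: fc_in].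
have [_ Hnz _ _] := W0_facts Hw.
split.
- move=> Eq; move: Hnz; by rewrite -D Eq subrr eqxx.
- left; rewrite D; exact: RW0.
Qed.

Lemma adj_cross : E (vx true allT) (vx false allT).
Proof.
have [_ Hnz _ _] := W0_facts cross_in.
split.
- move=> Eq; move: Hnz; by rewrite -vx_cross Eq subrr eqxx.
- left; rewrite vx_cross; exact: RW0 cross_in.
Qed.


Lemma posp_fa i : (i < k)%N -> forall l, posp (fa i) l = nat_of_bool (l == ix i).
Proof.
move=> Hi l; case: (eqVneq l (ix i)) => [->|H].
- by rewrite posp1 // fa_at; [bsplit; simpl; lia|lia].
- rewrite posp0 //; rewrite -(ix_val l) fa_at ?ltn_ord //.
  have : val l != i by apply: contra H => /eqP <-; rewrite ix_val.
  move=> H'; bsplit; simpl; lia.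
Qed.

Lemma posp_fc i : (i < k)%N -> forall l, posp (fc i) l = nat_of_bool (l == ix (2*k+i)).
Proof.
move=> Hi l; case: (eqVneq l (ix (2*k+i))) => [->|H].
- by rewrite posp1 // fc_at; [bsplit; simpl; lia|lia].
- rewrite posp0 //; rewrite -(ix_val l) fc_at ?ltn_ord //.
  have : val l != (2*k+i)%N by apply: contra H => /eqP <-; rewrite ix_val.
  move=> H'; bsplit; simpl; lia.
Qed.

Lemma negK (w w0 : 'cV[int]_n) j : RL w -> w != 0 -> w0 \in W0 ->
  (forall l, posp w0 l = nat_of_bool (l == j)) -> w j 0 != 0 ->
  forall l, (posp w l <= nat_of_bool (l == j))%N.
Proof.
move=> [G [Hrgb [Hg Hl]]] Hnz Hw0 Hp0 Hwj l.
have [Hk0 Hnz0 Hlt0 _] := W0_facts Hw0.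
pose m := if (0 < w j 0) then posp w else negp w.
have Hm : m \in msupp (binom K w).
  by rewrite msupp_binom // /m; case: ifP; rewrite eqxx ?orbT.
have Hd : mdivides (posp w0) m.
  move=> l'; rewrite Hp0; case: eqP => [->|]; last by [].
  rewrite /m; case: ifP => Hp.
  - have E1 : (posp w j)%:Z = Num.max (w j 0) 0 := posp_coord w j.
    move: E1; rewrite max_l ?ltW //; lia.
  - have E1 : (negp w j)%:Z = Num.max (- w j 0) 0 := negp_coord w j.
    move: E1; rewrite max_l; [|rewrite oppr_ge0; lia]; lia.
have := key Hrgb Hg Hl Hk0 Hnz0 Hlt0 Hm Hd l.
by rewrite Hp0.
Qed.

Lemma vxd_at sd f sd' g j : (j < n)%N ->
  (vx sd f - vx sd' g) (ix j) 0 = (nat_of_bool (vcoord sd f j))%:Z - (nat_of_bool (vcoord sd' g j))%:Z.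
Proof. by move=> H; rewrite !mxE ixK. Qed.

Lemma N1 f g : E (vx true f) (vx false g) -> (forall i, (i < k)%N -> f i) /\ (forall i, (i < k)%N -> g i).
Proof.
move=> [Hne Hr].
have main : forall w, RL w -> (w = vx true f - vx false g \/ w = vx false g - vx true f) ->
    (forall i, (i < k)%N -> f i) /\ (forall i, (i < k)%N -> g i).
  move=> w Hw Ew.
  have Hnz : w != 0.
    apply/negP => /eqP H0; apply: Hne; apply/eqP; rewrite -subr_eq0.
    case: Ew => Ew; rewrite Ew in H0; first by rewrite H0.
    by rewrite -opprB H0 oppr0.
  have Hst : posp w (ix (4*k)) = 1%N \/ posp w (ix (4*k).+1) = 1%N.
    case: Ew => ->; [left|right]; rewrite posp1 // vxd_at ?vc_s ?vc_t //; lia.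
  split => i Hi; apply/negPn/negP => Hfi.
  - have Hw0 : w (ix i) 0 != 0.
      by case: Ew => ->; rewrite vxd_at ?(vc_a _ _ Hi) //; try lia; move/negbTE: Hfi => ->.
    have H := negK Hw Hnz (fa_in Hi) (posp_fa Hi) Hw0.
    have N4 : (ix (4*k) == ix i) = false by apply/eqP => /(congr1 val); rewrite !ixK; lia.
    have N5 : (ix (4*k).+1 == ix i) = false by apply/eqP => /(congr1 val); rewrite !ixK; lia.
    have := H (ix (4*k)); have := H (ix (4*k).+1); rewrite N4 N5 /=; lia.
  - have Hw0 : w (ix (2*k+i)) 0 != 0.
      by case: Ew => ->; rewrite vxd_at ?(vc_c _ _ Hi) //; try lia; move/negbTE: Hfi => ->.
    have H := negK Hw Hnz (fc_in Hi) (posp_fc Hi) Hw0.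
    have N4 : (ix (4*k) == ix (2*k+i)) = false by apply/eqP => /(congr1 val); rewrite !ixK; lia.
    have N5 : (ix (4*k).+1 == ix (2*k+i)) = false by apply/eqP => /(congr1 val); rewrite !ixK; lia.
    have := H (ix (4*k)); have := H (ix (4*k).+1); rewrite N4 N5 /=; lia.
case: Hr => Hr; apply: main; eauto.
Qed.


Lemma N2 v : V0 v -> E (vx true allF) v -> exists2 i, (i < k)%N & v = vx true (tog allF i).
Proof.
move=> Hv; have [sd [g ->]] := fiber_inv Hv; move=> Hadj.
case: sd Hadj => Hadj; last first.
  by have [H _] := N1 Hadj; have := H 0%N hk.
have [Hne Hr] := Hadj.
have [i0 Hi0 Hg0] : exists2 i0, (i0 < k)%N & g i0.
  case: (boolP [exists i : 'I_k, g i]) => [/existsP [i Hi]|/existsP Hn]; first by exists i.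
  exfalso; apply: Hne; apply: vx_ext => i Hi; case Hgi: (g i) => //.
  by case: Hn; exists (Ordinal Hi).
set u := vx true allF.
have Hneg : forall w, RL w -> w != 0 -> (w = u - vx true g \/ w = vx true g - u) ->
    w = u - vx true g /\ forall j, (j < k)%N -> g j -> j = i0.
  move=> w Hw Hnz Ew.
  have Hw0 : w (ix i0) 0 != 0.
    by case: Ew => ->; rewrite vxd_at ?(vc_a _ _ Hi0) ?Hg0 /allF /=; lia.
  have H := negK Hw Hnz (fa_in Hi0) (posp_fa Hi0) Hw0.
  case: Ew => Ew.
  - split => // j Hj Hgj; apply/eqP/negP => Hji.
    have N4 : (ix j == ix i0) = false.
      apply/eqP => /(congr1 val); rewrite !ixK; lia.
    have := H (ix j); rewrite N4 /= Ew posp1 //.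
    rewrite vxd_at ?(vc_a _ _ Hj) ?Hgj /allF /=; lia.
  - exfalso.
    have N4 : (ix (k+i0) == ix i0) = false by apply/eqP => /(congr1 val); rewrite !ixK; lia.
    have := H (ix (k+i0)); rewrite N4 /= Ew posp1 //.
    rewrite vxd_at ?(vc_b _ _ Hi0) ?Hg0 /allF /=; lia.
have Hnz : forall w, (w = u - vx true g \/ w = vx true g - u) -> w != 0.
  move=> w Ew; apply/negP => /eqP H0; apply: Hne; apply/eqP; rewrite -subr_eq0.
  case: Ew => Ew; rewrite Ew in H0; first by rewrite H0.
  by rewrite -opprB H0 oppr0.
have Huniq : forall j, (j < k)%N -> g j -> j = i0.
  case: Hr => Hr.
  - have Ew : u - vx true g = u - vx true g \/ u - vx true g = vx true g - u by left.
    by have [_ H] := Hneg _ Hr (Hnz _ Ew) Ew.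
  - have Ew : vx true g - u = u - vx true g \/ vx true g - u = vx true g - u by right.
    by have [_ H] := Hneg _ Hr (Hnz _ Ew) Ew.
exists i0 => //; apply: vx_ext => j Hj; rewrite /tog /allF.
case: (eqVneq j i0) => [->|H]; first by rewrite Hg0.
by case Hgj: (g j) => //; move: H; rewrite (Huniq j Hj Hgj) eqxx.
Qed.


Lemma tog_inj sd f i j : (i < k)%N -> (j < k)%N -> vx sd (tog f i) = vx sd (tog f j) -> i = j.
Proof.
move=> Hi Hj Heq; case: (eqVneq i j) => // Hne; exfalso.
case: sd Heq => Heq.
- have := congr1 (fun u : 'cV[int]_n => u (ix i) 0) Heq; rewrite !mxE !ixK; try lia.
  rewrite !(vc_a _ _ Hi) /tog eqxx (negbTE Hne); by case: (f i).
- have := congr1 (fun u : 'cV[int]_n => u (ix (2*k+i)) 0) Heq; rewrite !mxE !ixK; try lia.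
  rewrite !(vc_c _ _ Hi) /tog eqxx (negbTE Hne); by case: (f i).
Qed.

Lemma deg_at_least x : V0 x -> degree_at_least V0 E x k.
Proof.
move=> Hx; have [sd [f ->]] := fiber_inv Hx.
exists [seq vx sd (tog f i) | i <- iota 0 k]; split.
- rewrite map_inj_in_uniq ?iota_uniq // => i j; rewrite !mem_iota => Hi Hj; apply: tog_inj; lia.
- by rewrite size_map size_iota.
- move=> y /mapP [i Hi ->]; split; first exact: fiber_vx.
  by apply: adj_tog; move: Hi; rewrite mem_iota.
Qed.

Lemma has_deg : has_degree V0 E (vx true allF) k.
Proof.
exists [seq vx true (tog allF i) | i <- iota 0 k]; split.
- rewrite map_inj_in_uniq ?iota_uniq // => i j; rewrite !mem_iota => Hi Hj; apply: tog_inj; lia.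
- by rewrite size_map size_iota.
- move=> y; split.
  + move=> /mapP [i Hi ->]; split; first exact: fiber_vx.
    by apply: adj_tog; move: Hi; rewrite mem_iota.
  + move=> [Hy Hadj]; have [i Hi ->] := N2 Hy Hadj.
    by apply: map_f; rewrite mem_iota.
Qed.


Lemma crt_sym (T : Type) (R : T -> T -> Prop) : (forall a b, R a b -> R b a) ->
  forall a b, clos_refl_trans T R a b -> clos_refl_trans T R b a.
Proof.
move=> Hs a b; elim => [x y Hxy|x|x y z _ H1 _ H2].
- by apply: rt_step; apply: Hs.
- exact: rt_refl.
- exact: rt_trans H2 H1.
Qed.

Local Notation Rel0 := (fun a b => V0 a /\ V0 b /\ adj_minus E [::] a b).

Lemma rel0_tog sd f i : (i < k)%N -> Rel0 (vx sd f) (vx sd (tog f i)).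
Proof. move=> Hi; split; [exact: fiber_vx|split; [exact: fiber_vx|]]. by split; [apply: adj_tog|]. Qed.

Lemma path_base sd f : clos_refl_trans _ Rel0 (vx sd f) (vx sd allT).
Proof.
pose fm m := fun j => if (j < m)%N then true else f j.
have H : forall m, (m <= k)%N -> clos_refl_trans _ Rel0 (vx sd f) (vx sd (fm m)).
  elim => [_|m IH Hm].
  - by rewrite (@vx_ext sd (fm 0%N) f) //; apply: rt_refl.
  - apply: rt_trans (IH (ltnW Hm)) _.
    case Hfm: (f m).
    + rewrite (@vx_ext sd (fm m.+1) (fm m)); first exact: rt_refl.
      move=> j Hj; rewrite /fm /=; case: (ltngtP j m) => Hjm.
      * by rewrite ltnS ltnW.
      * by rewrite ltnS leqNgt Hjm.
      * by rewrite Hjm ltnSn Hfm.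
    + rewrite (@vx_ext sd (fm m.+1) (tog (fm m) m)); first exact: rt_step (rel0_tog _ _ Hm).
      move=> j Hj; rewrite /fm /tog /=; case: (ltngtP j m) => Hjm.
      * by rewrite ltnS ltnW.
      * by rewrite ltnS leqNgt Hjm.
      * by rewrite Hjm ltnSn Hfm.
have := H k (leqnn k).
by rewrite (@vx_ext sd (fm k) allT) // => j Hj; rewrite /fm Hj.
Qed.

Lemma connected0 : graph_connected V0 (adj_minus E [::]).
Proof.
have Hs : forall a b, Rel0 a b -> Rel0 b a.
  move=> a b [Ha [Hb [Hab _]]]; split => //; split => //; split; [exact: adj_sym|by []].
move=> x y Hx Hy.
have [sd [f ->]] := fiber_inv Hx; have [sd' [g ->]] := fiber_inv Hy.
apply: rt_trans (path_base sd f) _.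
apply: rt_trans _ (crt_sym Hs (path_base sd' g)).
have Hc : Rel0 (vx true allT) (vx false allT).
  split; [exact: fiber_vx|split; [exact: fiber_vx|]]. by split; [apply: adj_cross|].
case: sd; case: sd'; try exact: rt_refl.
- exact: rt_step Hc.
- exact: rt_step (Hs _ _ Hc).
Qed.

Lemma side_vx sd f : vx sd f (ix (4*k)) 0 = (nat_of_bool sd)%:Z.
Proof. by rewrite mxE ixK ?vc_s //; lia. Qed.

Lemma bridge : ~ graph_connected V0 (adj_minus E [:: (vx true allT, vx false allT)]).
Proof.
set F := [:: (vx true allT, vx false allT)].
move=> Hc.
have Hinv : forall a b, clos_refl_trans _ (fun a b => V0 a /\ V0 b /\ adj_minus E F a b) a b ->
    a (ix (4*k)) 0 = b (ix (4*k)) 0.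
  move=> a b; elim => [x y [Hx [Hy [Hxy [Hn1 Hn2]]]]|//|x y z _ H1 _ H2]; last by rewrite H1 H2.
  move: Hxy Hn1 Hn2; have [sd [f ->]] := fiber_inv Hx; have [sd' [g ->]] := fiber_inv Hy.
  move=> Hxy Hn1 Hn2; rewrite !side_vx.
  case: sd Hxy Hn1 Hn2; case: sd' => // Hxy Hn1 Hn2.
  - have [Hf Hg] := N1 Hxy; move/negP: Hn1; case; rewrite inE.
    by rewrite (@vx_ext true f allT) ?(@vx_ext false g allT) // => i Hi; rewrite ?Hf ?Hg.
  - have [Hf Hg] := N1 (adj_sym Hxy); move/negP: Hn2; case; rewrite inE.
    by rewrite (@vx_ext true g allT) ?(@vx_ext false f allT) // => i Hi; rewrite ?Hf ?Hg.
have := Hinv _ _ (Hc _ _ (fiber_vx true allT) (fiber_vx false allT)).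
by rewrite !side_vx.
Qed.

End Adj.

End Conc.

Theorem corollary1 (K : fieldType) (k : nat) (hk : (1 <= k)%N) :
  let V := fiber (Ak k) (e_last k) in
  let E := fiber_adj (R_lex K (Ak k)) in
  edge_connectivity_is V E 1 /\ min_degree_is V E k.
Proof.
move=> V E; split.
- split.
  + split.
    * exists (vx k true (allT)), (vx k false allT); split; [exact: fiber_vx|split; [exact: fiber_vx|]].
      exact: (@adj_cross k hk K).1.
    * move=> F; case: F => // _; exact: connected0.
  + move=> m [_ Hm]; case: (leqP m 1) => // H2; exfalso.
    by apply: (bridge hk (K := K)); apply: Hm.
- split.
  + exists (vx k true allF); split; [exact: fiber_vx|exact: has_deg].
  + move=> x Hx; exact: deg_at_least.
Qed.
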